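(* Let $m\ge2$ be even and $V$ a finite-dimensional $\mathbb{K}$-vector space with ordered basis. Then there is a filtration $$\{0\}=\mathrm{HPf}^{(m,1)}(V)\subseteq\mathrm{HPf}^{(m,2)}(V)\subseteq\dots\subseteq\mathrm{HPf}^{(m,l)}(V)\subseteq\mathrm{HPf}^{(m,l+1)}(V)\subseteq\dots\subseteq\textstyle\bigwedge^mV$$ which is exhaustive: $\mathrm{HPf}^{(m,L)}(V)=\bigwedge^mV$ for all sufficiently large $L$.
   Context: Let the basis be $(e_i)_{i\in B}$, $B$ totally ordered. For $x\in\bigwedge^mV$ write $x=\sum_Ix_Ie_I$, $e_I=e_{i_1}\wedge\dots\wedge e_{i_m}$ for $I=\{i_1<\dots<i_m\}$. For $A\subseteq B$ with $|A|=mk$, $\mathrm{hpf}^{(m,k)}_A(x)=\sum\mathrm{sgn}(I_1,\dots,I_k)x_{I_1}\cdots x_{I_k}$, summed over unordered partitions of $A$ into $m$-sets $I_1,\dots,I_k$, with $\mathrm{sgn}$ the sign of the permutation of $A$ listing $I_1,\dots,I_k$ successively, each increasingly. $\mathrm{HPf}^{(m,k)}(V)$ is the set of $x\in\bigwedge^mV$ with $\mathrm{hpf}^{(m,k)}_A(x)=0$ for all $A\subseteq B$, $|A|=mk$. *)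

(* Defs.v *)
From HB Require Import structures.
From mathcomp Require Import all_boot all_order all_algebra.
Set Implicit Arguments. Unset Strict Implicit. Unset Printing Implicit Defensive.
Import Order.TTheory GRing.Theory Num.Theory.
Local Open Scope ring_scope.

(* V = K^n with ordered basis (e_i)_{i : 'I_n} (order of 'I_n).
   An element of /\^m V is given by its coordinates x_I in the basis e_I,
   I ranging over the m-subsets of 'I_n. *)
Definition msubset (n m : nat) := {I : {set 'I_n} | #|I| == m}.

Definition wedge (K : fieldType) (n m : nat) := {ffun msubset n m -> K}.

(* the coordinate x_I (0 if #|I| <> m, never used in that case) *)
Definition coord_wedge (K : fieldType) (n m : nat) (x : wedge K n m)
    (I : {set 'I_n}) : K :=
  oapp x 0 (insub I : option (msubset n m)).

Fixpoint ninv (n : nat) (s : seq 'I_n) : nat :=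
  match s with
  | [::] => 0%N
  | a :: s' => (count (fun b : 'I_n => b < a)%N s' + ninv s')%N
  end.

(* least element of a block (n if empty) *)
Definition bmin (n : nat) (B : {set 'I_n}) : nat := \big[minn/n]_(i in B) (i : nat).

Definition listing (n : nat) (P : {set {set 'I_n}}) : seq 'I_n :=
  flatten [seq sort (fun i j : 'I_n => (i <= j)%N) (enum B)
          | B : {set 'I_n} <- sort (fun B C => (bmin B <= bmin C)%N) (enum P)].

Definition psign (K : fieldType) (n : nat) (P : {set {set 'I_n}}) : K :=
  (-1) ^+ ninv (listing P).

Definition hpf (K : fieldType) (n m k : nat) (x : wedge K n m)
    (A : {set 'I_n}) : K :=
  \sum_(P : {set {set 'I_n}} | partition P A && [forall B in P, #|B| == m]
                                && (#|P| == k))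
     psign K P * \prod_(B in P) coord_wedge x B.

Definition HPf (K : fieldType) (n m k : nat) (x : wedge K n m) : Prop :=
  forall A : {set 'I_n}, #|A| = (m * k)%N -> hpf k x A = 0.

(* Main.v *)
Require Import Defs.
From HB Require Import structures.
From mathcomp Require Import all_boot all_order all_algebra.
Import Order.TTheory GRing.Theory Num.Theory.
From mathcomp Require Import zify ring.
Set Implicit Arguments. Unset Strict Implicit. Unset Printing Implicit Defensive.

Section Aux.
Variable n : nat.

Lemma ninv_cat (s t : seq 'I_n) :
  ninv (s ++ t) = (ninv s + ninv t + \sum_(a <- s) count (fun b : 'I_n => b < a) t)%N.
Proof.
elim: s => [|a s IH] /=; first by rewrite big_nil addn0.
rewrite big_cons IH count_cat; lia.
Qed.

Lemma ninv_sorted (s : seq 'I_n) :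
  sorted (fun i j : 'I_n => (i <= j)%N) s -> ninv s = 0%N.
Proof.
elim: s => [|a s IH] //= Hp.
rewrite IH; last exact: path_sorted Hp.
have Hall := order_path_min (fun (y x z : 'I_n) (h1 : (x <= y)%N) h2 => leq_trans h1 h2) Hp.
apply/eqP; rewrite addn0 -leqn0 leqNgt -has_count; apply/hasPn => b bs.
by rewrite -leqNgt; move/allP: Hall => /(_ b bs).
Qed.

Lemma bmin_le (B : {set 'I_n}) i : i \in B -> (bmin B <= i)%N.
Proof.
move=> iB; rewrite /bmin -big_filter.
have : i \in [seq j <- index_enum 'I_n | j \in B] by rewrite mem_filter iB mem_index_enum.
elim: [seq j <- index_enum 'I_n | j \in B] => [|j r IH] //=.
rewrite inE big_cons => /orP [/eqP <-|/IH h]; first by rewrite geq_minl.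
by rewrite geq_min h orbT.
Qed.

Lemma bmin_ge (B : {set 'I_n}) c : (c <= n)%N -> (forall i, i \in B -> c <= i)%N ->
  (c <= bmin B)%N.
Proof.
move=> cn H; rewrite /bmin; apply: (big_ind (fun v => c <= v)%N) => //.
by move=> x y hx hy; rewrite leq_min hx hy.
Qed.

Lemma bmin_mem (B : {set 'I_n}) : B != set0 -> exists2 b, b \in B & bmin B = b.
Proof.
move=> /set0Pn [b0 b0B].
have: (bmin B == n) || [exists b in B, bmin B == b].
  rewrite /bmin; apply: (big_ind (fun v => (v == n) || [exists b in B, v == b])).
  - by rewrite eqxx.
  - move=> x y hx hy; case: (leqP x y) => h //.
  - by move=> i iB; apply/orP; right; apply/existsP; exists i; rewrite iB eqxx.
case/orP => [/eqP h|/existsP [b /andP [bB /eqP h]]]; last by exists b.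
by have := bmin_le b0B; rewrite h leqNgt ltn_ord.
Qed.

Lemma bmin_inj (P : {set {set 'I_n}}) : trivIset P -> set0 \notin P ->
  {in P &, injective (@bmin n)}.
Proof.
move=> tP s0 B C BP CP e.
have [b bB hb] := bmin_mem (B := B) (memPn s0 B BP).
have [c cC hc] := bmin_mem (B := C) (memPn s0 C CP).
have ebc : b = c by apply: val_inj; rewrite /= -hb -hc e.
by rewrite -(def_pblock tP BP bB) -(def_pblock tP CP cC) ebc.
Qed.

Definition rB := (fun B C : {set 'I_n} => (bmin B <= bmin C)%N).
Definition ltB := (fun B C : {set 'I_n} => (bmin B < bmin C)%N).

Lemma sorted_lt (P : {set {set 'I_n}}) : trivIset P -> set0 \notin P ->
  sorted ltB (sort rB (enum P)).
Proof.
move=> tP s0.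
have -> : ltB = relpre (@bmin n) ltn by [].
rewrite -sorted_map ltn_sorted_uniq_leq sorted_map; apply/andP; split.
  rewrite map_inj_in_uniq ?sort_uniq ?enum_uniq //.
  move=> B C; rewrite !mem_sort !mem_enum; exact: bmin_inj.
apply: sort_sorted => B C; exact: leq_total.
Qed.

Lemma listing_U1 (I : {set 'I_n}) (P : {set {set 'I_n}}) :
  trivIset (I |: P) -> set0 \notin I |: P -> I \notin P ->
  (forall B, B \in P -> bmin I < bmin B)%N ->
  listing (I |: P) = sort (fun i j : 'I_n => (i <= j)%N) (enum I) ++ listing P.
Proof.
move=> tP s0 IP Hlt.
have tP' : trivIset P by apply: trivIsetS tP; apply: subsetUr.
have s0' : set0 \notin P by apply: contra s0 => h; rewrite in_setU1 h orbT.
rewrite /listing.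
have -> : sort rB (enum (I |: P)) = I :: sort rB (enum P); last by [].
apply: (irr_sorted_eq (leT := ltB)).
- move=> x y z; exact: ltn_trans.
- move=> x; exact: ltnn.
- exact: sorted_lt.
- rewrite /= path_sortedE; last by move=> x y z; exact: ltn_trans.
  rewrite sorted_lt // andbT; apply/allP => B; rewrite mem_sort mem_enum; exact: Hlt.
- by move=> B; rewrite inE !mem_sort !mem_enum in_setU1.
Qed.

Lemma count_listing (P : {set {set 'I_n}}) (p : pred 'I_n) : trivIset P ->
  count p (listing P) = (\sum_(x in cover P | p x) 1)%N.
Proof.
move=> tP; rewrite big_trivIset_cond // /listing count_flatten -map_comp sumnE big_map.
rewrite (perm_big (enum P)); last by rewrite perm_sort.
rewrite big_enum /=; apply: eq_bigr => B _.
rewrite (permP (permEl (perm_sort _ _))) -sum1_count.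
by rewrite big_enum_cond.
Qed.

Definition Qp (m k : nat) (A : {set 'I_n}) (P : {set {set 'I_n}}) :=
  partition P A && [forall B in P, #|B| == m] && (#|P| == k).

Lemma Q_U1 m k (A I : {set 'I_n}) (a0 : 'I_n) (P : {set {set 'I_n}}) :
  I \subset A -> a0 \in I -> #|I| = m ->
  Qp m k.+1 A (I |: P) && (I \notin P) = Qp m k (A :\: I) P.
Proof.
move=> IA a0I cI; apply/idP/idP.
- case/andP => /andP [/andP [/and3P [/eqP cov tP s0] /forall_inP bl] /eqP cP] IP.
  have tP' : trivIset P by apply: trivIsetS tP; apply: subsetUr.
  apply/andP; split; first (apply/andP; split).
  + rewrite /partition; apply/and3P; split => //.
    * by rewrite -{1}(setU1K IP) coverD1 ?cov ?setU11.
    * by apply: contra s0 => h; rewrite in_setU1 h orbT.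
  + by apply/forall_inP => B BP; apply: bl; rewrite in_setU1 BP orbT.
  + by move: cP; rewrite cardsU1 IP add1n => -[->].
- case/andP => /andP [/and3P [/eqP cov tP s0] /forall_inP bl] /eqP cP.
  have dis : {in P, forall B : {set 'I_n}, [disjoint I & B]}.
    move=> B BP; rewrite -setI_eq0; apply/eqP/setP => y; rewrite !inE.
    apply/negbTE/negP => /andP [yI yB].
    have : y \in cover P by apply/bigcupP; exists B.
    by rewrite cov !inE yI.
  have [tU IP] := trivIsetU1 dis tP s0.
  rewrite IP andbT; apply/andP; split; first (apply/andP; split).
  + rewrite /partition; apply/and3P; split => //.
    * rewrite /cover big_setU1 //= -/(cover P) cov; apply/eqP/setP => y.
      rewrite !inE; case yI: (y \in I) => //=; symmetry; exact: (subsetP IA).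
    * rewrite in_setU1 negb_or s0 andbT; apply/eqP => h.
      by move: a0I; rewrite -h inE.
  + apply/forall_inP => B; rewrite in_setU1 => /orP [/eqP ->|BP]; first by rewrite cI.
    exact: bl.
  + by rewrite cardsU1 IP cP.
Qed.

Lemma hpf_dec (K : fieldType) m k (x : wedge K n m) (A : {set 'I_n}) (a0 : 'I_n) :
  a0 \in A ->
  hpf k.+1 x A = (\sum_(I : {set 'I_n} | (I \subset A) && (a0 \in I) && (#|I| == m))
     \sum_(P : {set {set 'I_n}} | Qp m k (A :\: I) P)
        psign K (I |: P) * \prod_(B in I |: P) coord_wedge x B)%R.
Proof.
move=> a0A; rewrite /hpf.
rewrite (partition_big (fun P => pblock P a0)
   (fun I => (I \subset A) && (a0 \in I) && (#|I| == m))) /=.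
  apply: eq_bigr => I /andP [/andP [IA a0I] /eqP cI].
  rewrite (reindex_onto (fun P' => I |: P') (fun P => P :\ I)) /=.
    apply: eq_bigl => P'; rewrite -(Q_U1 k P' IA a0I cI) /Qp.
    apply/idP/idP.
    - case/andP => /andP [QP _] /eqP e.
      by rewrite QP /= -e setD11.
    - case/andP => QP IP; rewrite QP /= setU1K // eqxx andbT.
      case/andP: QP => /andP [/and3P [_ tP _] _] _.
      by rewrite (def_pblock tP (setU11 _ _) a0I).
  move=> P /andP [QP /eqP pb]; apply: setD1K; rewrite -pb.
  apply: pblock_mem; case/andP: QP => /andP [/and3P [/eqP -> _ _] _] _ //.
move=> P /andP [/andP [/and3P [/eqP cov tP s0] /forall_inP bl] _].
have a0c : a0 \in cover P by rewrite cov.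
have pbP := pblock_mem a0c.
rewrite mem_pblock a0c bl // andbT.
by rewrite andbT -cov; apply/subsetP => y yB; apply/bigcupP; exists (pblock P a0).
Qed.

Lemma psign_U1 (K : fieldType) m k (A I : {set 'I_n}) (a0 : 'I_n) (P : {set {set 'I_n}}) :
  (forall b, b \in A -> a0 <= b)%N -> I \subset A -> a0 \in I -> #|I| = m ->
  Qp m k (A :\: I) P ->
  psign K (I |: P) = ((-1) ^+ (\sum_(a <- sort (fun i j : 'I_n => (i <= j)%N) (enum I))
       \sum_(y in A :\: I | (y < a)%N) 1)%N * psign K P)%R.
Proof.
move=> amin IA a0I cI QP.
have := QP; rewrite -(Q_U1 k P IA a0I cI) => /andP [QU IP].
case/andP: QU => /andP [/and3P [_ tU sU] _] _.
case/andP: QP => /andP [/and3P [/eqP cov tP _] _] _.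
rewrite /psign listing_U1 //; last first.
  move=> B BP; apply: (leq_ltn_trans (bmin_le a0I)).
  apply: bmin_ge; first exact: ltn_ord.
  move=> i iB; have : i \in cover P by apply/bigcupP; exists B.
  rewrite cov !inE => /andP [iI iA]; rewrite ltn_neqAle amin // andbT.
  apply/negP => /eqP e; move: iI; rewrite (_ : i = a0) ?a0I //; exact: val_inj.
rewrite ninv_cat ninv_sorted; last by apply: sort_sorted => i j; exact: leq_total.
rewrite add0n exprD mulrC; congr (_ * _)%R; congr (_ ^+ _)%R.
by apply: eq_bigr => a _; rewrite count_listing // cov.
Qed.

Lemma hpf1 (K : fieldType) m (x : wedge K n m) (A : {set 'I_n}) :
  (0 < m)%N -> #|A| = m -> hpf 1 x A = coord_wedge x A.
Proof.
move=> m0 cA.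
have A0 : A != set0 by apply/eqP => e; move: cA; rewrite e cards0 => e2; rewrite -e2 in m0.
rewrite /hpf (big_pred1 [set A]); last first.
  move=> P; apply/idP/idP.
  - case/andP => /andP [/and3P [/eqP cov _ _] _] /cards1P [B eB].
    by move: cov; rewrite eB cover1 => ->; rewrite /= eqxx.
  - move/eqP => ->; rewrite /partition cover1 eqxx trivIset1 in_set1 eq_sym A0 cards1 /=.
    by rewrite andbT; apply/forall_inP => B; rewrite in_set1 => /eqP ->; rewrite cA.
rewrite big_set1 /psign /listing enum_set1 /= cats0 ninv_sorted ?mul1r //.
by apply: sort_sorted => i j; exact: leq_total.
Qed.
End Aux.

Local Open Scope ring_scope.

Theorem proposition3p17 (K : fieldType) (n m : nat) :
  (2 <= m)%N -> ~~ odd m ->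
  (forall x : wedge K n m, HPf 1 x <-> x = 0) /\
  (forall (l : nat) (x : wedge K n m), (1 <= l)%N -> HPf l x -> HPf l.+1 x) /\
  (exists L0 : nat, forall L : nat, (L0 <= L)%N -> forall x : wedge K n m, HPf L x).
Proof.
move=> m2 _; have m0 : (0 < m)%N by apply: leq_trans m2.
split; [|split].
- move=> x; split.
  + move=> H; apply/ffunP => I; rewrite ffunE.
    have cI : #|val I| = (m * 1)%N by rewrite muln1; apply/eqP; exact: (valP I).
    have cI1 : #|val I| = m by apply/eqP; exact: (valP I).
    have := H _ cI; rewrite hpf1 // /coord_wedge.
    case: insubP => [u _ /val_inj -> //|]; by rewrite (valP I).
  + move=> -> A cA; rewrite muln1 in cA; rewrite hpf1 // /coord_wedge.
    by case: insub => //= u; rewrite ffunE.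
- move=> l x l1 H A cA.
  have : A != set0.
    apply/eqP => e; move: cA; rewrite e cards0 => e2.
    have : (0 < m * l.+1)%N by rewrite muln_gt0 m0.
    by rewrite -e2.
  case/set0Pn => b bA.
  case: (arg_minnP (fun i : 'I_n => nat_of_ord i) bA) => a0 a0A amin.
  rewrite (hpf_dec l x a0A); apply: big1 => I /andP [/andP [IA a0I] /eqP cI].
  pose c := (\sum_(a <- sort (fun i j : 'I_n => (i <= j)%N) (enum I))
       \sum_(y in A :\: I | (y < a)%N) 1)%N.
  have IU : forall P, Qp m l (A :\: I) P -> I \notin P.
    by move=> P QP; move: QP; rewrite -(Q_U1 l P IA a0I cI) => /andP [].
  rewrite (eq_bigr (fun P => ((-1) ^+ c * coord_wedge x I) *
        (psign K P * \prod_(B in P) coord_wedge x B))); last first.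
    move=> P QP; rewrite (psign_U1 K amin IA a0I cI QP) big_setU1 ?IU //=.
    rewrite /c; ring.
  rewrite -mulr_sumr.
  have cD : #|A :\: I| = (m * l)%N.
    rewrite cardsD (setIidPr IA) cA cI mulnS; lia.
  have h := H _ cD; rewrite /hpf in h.
  by rewrite /Qp h mulr0.
- exists n.+1 => L hL x A cA; exfalso.
  have := max_card A; rewrite card_ord cA => h.
  have : (2 * n.+1 <= m * L)%N by apply: leq_mul.
  lia.
Qed.
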